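(* Let $T=(V,E)$ be a tree with $\mathrm{pthin}(T)=2$. Then there exists a simple path $C_0=v_1,\dots,v_k$ in $T$ and a linear ordering of $V$ that is strongly consistent with the partition $\{V^0,V^1\}$, where $V^0=\{v_1,\dots,v_k\}$ and $V^1=V\setminus V^0$.
   Context: For a graph $G=(V,E)$, a linear ordering $<$ of $V$ and a partition of $V$ into classes are called strongly consistent if for every triple $r<s<t$ of vertices with $rt\in E$: if $r$ and $s$ belong to the same class then $st\in E$, and if $s$ and $t$ belong to the same class then $rs\in E$. The proper thinness $\mathrm{pthin}(G)$ is the minimum $k$ such that some ordering of $V$ and some partition of $V$ into $k$ classes are strongly consistent. *)

(* Defs.v *)
From mathcomp Require Import all_boot.
Set Implicit Arguments. Unset Strict Implicit. Unset Printing Implicit Defensive.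

Definition simple_graph (T : finType) (e : rel T) : Prop :=
  symmetric e /\ irreflexive e.

Definition connected_graph (T : finType) (e : rel T) : Prop :=
  forall x y : T, connect e x y.

Definition acyclic_graph (T : finType) (e : rel T) : Prop :=
  forall c : seq T, uniq c -> 3 <= size c -> ~~ cycle e c.

Definition is_tree (T : finType) (e : rel T) : Prop :=
  [/\ simple_graph e, connected_graph e & acyclic_graph e].

(* A linear ordering of V is given by an injective map f : T -> nat
   (r < s iff f r < f s); a partition into classes by a class map c. *)
Definition strongly_consistent (T : finType) (K : eqType) (e : rel T)
    (f : T -> nat) (c : T -> K) : Prop :=
  forall r s t : T, f r < f s -> f s < f t -> e r t ->
    (c r == c s -> e s t) /\ (c s == c t -> e r s).

Definition pthin_le (T : finType) (e : rel T) (k : nat) : Prop :=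
  exists (f : T -> nat) (c : T -> 'I_k), injective f /\ strongly_consistent e f c.

Lemma pthin_le_card (T : finType) (e : rel T) : pthin_le e #|T|.
Proof.
exists (fun x => nat_of_ord (enum_rank x)), (@enum_rank T); split.
  by move=> x y /val_inj /enum_rank_inj.
move=> r s t lrs lst _; split=> /eqP /enum_rank_inj E; [move: lrs | move: lst]; by rewrite /= E ltnn.
Qed.

Definition pthin_eq (T : finType) (e : rel T) (k : nat) : Prop :=
  pthin_le e k /\ (forall j, pthin_le e j -> k <= j).

(* Main.v *)
Require Import Defs.
From mathcomp Require Import all_boot zify.
Set Implicit Arguments. Unset Strict Implicit. Unset Printing Implicit Defensive.

Lemma I2_eq (a b d : 'I_2) : a != d -> b != d -> a = b.
Proof.
move=> H1 H2; apply: val_inj; move: H1 H2; rewrite -!(inj_eq val_inj) /=.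
have:= ltn_ord a; have:= ltn_ord b; have:= ltn_ord d; lia.
Qed.

Section Main.
Variables (T : finType) (e : rel T).
Hypothesis esym : symmetric e.
Hypothesis eirr : irreflexive e.
Hypothesis eacyc : acyclic_graph e.
Variable f : T -> nat.
Hypothesis finj : injective f.
Variable c : T -> 'I_2.
Hypothesis sc : strongly_consistent e f c.

Lemma scL r s t : f r < f s -> f s < f t -> e r t -> c r = c s -> e s t.
Proof. by move=> h1 h2 h3 h4; have [A _] := sc h1 h2 h3; apply: A; rewrite h4. Qed.
Lemma scR r s t : f r < f s -> f s < f t -> e r t -> c s = c t -> e r s.
Proof. by move=> h1 h2 h3 h4; have [_ A] := sc h1 h2 h3; apply: A; rewrite h4. Qed.

Lemma e_neq x y : e x y -> x != y.
Proof. by apply: contraTneq => ->; rewrite eirr. Qed.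

Lemma no_cyc (x : T) s : uniq (x :: s) -> 2 <= size s -> path e x s -> e (last x s) x -> False.
Proof.
move=> U S Pa E; have := eacyc U; rewrite /= ltnS => /(_ S).
by rewrite rcons_path Pa E.
Qed.

Lemma notri x y z : e x y -> e y z -> e x z -> False.
Proof.
move=> exy eyz exz; apply: (@no_cyc x [:: y; z]) => //=.
  by rewrite !inE negb_or (e_neq exy) (e_neq exz) (e_neq eyz).
by rewrite exy eyz.
by rewrite esym.
Qed.

Lemma finj_neq x y : x != y -> f x != f y.
Proof. by apply: contra => /eqP/finj ->. Qed.

Lemma consec x y z : e x y -> c x = c y -> f x < f z < f y -> c z != c x.
Proof.
move=> exy cxy /andP[h1 h2]; apply/negP => /eqP czx.
have A := scL h1 h2 exy; have B := scR h1 h2 exy.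
by apply: (notri (B _) (A _) exy); rewrite ?czx ?cxy.
Qed.

Lemma EC x y s : e x y -> f x < f s < f y ->
  [\/ e s x, e s y | [/\ c x = c y, c s != c x & forall z, e s z -> c z = c s]].
Proof.
move=> exy /andP[h1 h2].
have A := scL h1 h2 exy; have B := scR h1 h2 exy.
case esx: (e s x); first by constructor 1.
case esy: (e s y); first by constructor 2.
have ncxs : c x != c s by apply: contraFneq esy; exact: A.
have ncsy : c y != c s by apply: contraFneq esx => cys; rewrite esym; apply: B; rewrite cys.
have cxy : c x = c y by apply: I2_eq ncxs ncsy.
constructor 3; split => //; first by rewrite eq_sym.
move=> z esz; apply/eqP; apply/negPn/negP => nz.
have czx : c z = c x by apply: I2_eq nz ncxs.
have zs : z != s by apply: contraTneq esz => ->; rewrite eirr.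
case: (ltngtP (f z) (f s)) => hz; last by move/finj: hz => hz; rewrite hz eqxx in zs.
- case: (ltngtP (f x) (f z)) => hxz.
  + by have := consec exy cxy (introT andP (conj hxz (ltn_trans hz h2))); rewrite czx eqxx.
  + have A' := scL hxz h1 (etrans (esym z s) esz); by move: (A' czx); rewrite esym esx.
  + by move/finj: hxz => hxz; rewrite -hxz esx in esz.
- case: (ltngtP (f z) (f y)) => hyz.
  + by have := consec exy cxy (introT andP (conj (ltn_trans h1 hz) hyz)); rewrite czx eqxx.
  + have B' := scR h2 hyz esz.
    have : e s y by apply: B'; rewrite czx cxy.
    by rewrite esy.
  + by move/finj: hyz => hyz; rewrite hyz esy in esz.
Qed.

Lemma surround x y r t u : e x y -> e r t -> c x = c y -> c r = c t -> c x = c r ->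
  f x < f u < f y -> f r < f u < f t -> x = r /\ y = t.
Proof.
move=> exy ert cxy crt cxr /andP[h1 h2] /andP[h3 h4].
split.
- case: (ltngtP (f x) (f r)) => h; last by apply: finj.
  + by have := consec exy cxy (introT andP (conj h (ltn_trans h3 h2))); rewrite cxr eqxx.
  + by have := consec ert crt (introT andP (conj h (ltn_trans h1 h4))); rewrite cxr eqxx.
- case: (ltngtP (f y) (f t)) => h; last by apply: finj.
  + by have := consec ert crt (introT andP (conj (ltn_trans h3 h2) h)); rewrite -cxy cxr eqxx.
  + by have := consec exy cxy (introT andP (conj (ltn_trans h1 h4) h)); rewrite -crt -cxr eqxx.
Qed.


Lemma cross_gen w s u : path e w s -> f w < f u -> f u < f (last w s) -> u \notin w :: s ->
  exists r t, [/\ r \in w :: s, t \in w :: s, e r t & f r < f u < f t].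
Proof.
elim: s w => [|y s IH] w /=; first by move=> _ h1 h2; lia.
move=> /andP[ewy py] h1 h2; rewrite inE negb_or => /andP[uw uy'].
case: (ltngtP (f u) (f y)) => h.
- by exists w, y; rewrite !inE !eqxx /= orbT h1 h.
- have [r [t [rin tin ert hh]]] := IH y py h h2 uy'.
  by exists r, t; split => //; rewrite inE ?rin ?tin orbT.
- by move/finj: h => h; rewrite h inE eqxx in uy'.
Qed.

Variables (v : T) (ps : seq T).
Hypothesis Puniq : uniq (v :: ps).
Hypothesis Ppath : path e v ps.
Hypothesis Pmin : forall x, f v <= f x.
Hypothesis Pmax : forall x, f x <= f (last v ps).
Hypothesis conn : connected_graph e.

Local Notation P := (v :: ps).

Lemma crossP u : u \notin P -> exists r t, [/\ r \in P, t \in P, e r t & f r < f u < f t].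
Proof.
move=> uP; apply: cross_gen => //.
- have := Pmin u; have : u != v by apply: contraNneq uP => ->; rewrite inE eqxx.
  by move/finj_neq; lia.
- have := Pmax u; have : u != last v ps by apply: contraNneq uP => ->; apply: mem_last.
  by move/finj_neq; lia.
Qed.

Lemma CL u : u \notin P -> (forall q, q \in P -> ~~ e u q) -> forall z, e u z -> c z = c u.
Proof.
move=> uP N; have [r [t [rP tP ert h]]] := crossP uP.
case: (EC ert h) => [eur|eut|[_ _ H]] //.
- by rewrite (negbTE (N r rP)) in eur.
- by rewrite (negbTE (N t tP)) in eut.
Qed.

Definition eR := [rel x y | [&& e x y, x \notin P & y \notin P]].
Definition att x q := (q \in P) && [exists h, connect eR x h && e h q].
Definition anchor x := if x \in P then x else odflt x [pick q | att x q].

Lemma eR_sym : symmetric eR.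
Proof. by move=> x y /=; rewrite esym; case: (e y x) => //=; rewrite andbC. Qed.

Lemma path_eR_off x s : path eR x s -> all (fun y => y \notin P) s.
Proof. by elim: s x => //= y s IH x /andP[/and3P[_ _ ->] /IH]. Qed.

Lemma connect_eR_off x y : x \notin P -> connect eR x y -> y \notin P.
Proof.
move=> xP /connectP[s ps' ->]; have := path_eR_off ps'.
case: s ps' => //= z s _ /andP[zP]; rewrite /= in zP.
elim/last_ind: s zP => //= s w _ _; rewrite all_rcons last_rcons => /andP[] //.
Qed.

Lemma att_ex x : x \notin P -> exists q, att x q.
Proof.
move=> xP; have /connectP[s ps' Hl] := conn x v.
have : last x s \in P by rewrite -Hl inE eqxx.
elim: s x xP ps' {Hl} => [|y s IH] x xP /=; first by rewrite (negbTE xP).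
move=> /andP[exy py] Hl.
case yP: (y \in P).
- exists y; rewrite /att yP /=; apply/existsP; exists x; by rewrite connect0.
- have [q /andP[qP /existsP[h /andP[cyh ehq]]]] := IH y (negbT yP) py Hl.
  exists q; rewrite /att qP /=; apply/existsP; exists h; rewrite ehq andbT.
  apply: connect_trans cyh; apply: connect1; by rewrite /= exy xP yP.
Qed.

Lemma split2 (s : seq T) x y : x \in s -> y \in s -> x != y ->
  exists A B C, s = A ++ x :: B ++ y :: C \/ s = A ++ y :: B ++ x :: C.
Proof.
case/splitPr => A R; rewrite mem_cat inE => /orP[yA|/orP[/eqP->|yR]] nxy.
- case/splitPr: yA nxy => A1 A2 nxy; exists A1, A2, R; right; by rewrite -catA.
- by rewrite eqxx in nxy.
- case/splitPr: yR nxy => B C nxy; exists A, B, C; by left.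
Qed.

Lemma P_sub A a B b C : P = A ++ a :: B ++ b :: C ->
  path e a (B ++ [:: b]) /\ uniq (a :: B ++ [:: b]).
Proof.
move=> HP; split.
- have : sorted e P by [].
  rewrite HP sorted_cat_cons => /andP[_]; rewrite cat_path => /andP[p1 /andP[p2 _]].
  by rewrite cat_path p1 /= p2.
- move: Puniq; rewrite HP cat_uniq => /and3P[_ _].
  rewrite -cat_cons -(cat1s b C) catA cat_uniq => /andP[//].
Qed.

Lemma P_mem A a B b C : P = A ++ a :: B ++ b :: C -> forall z, z \in a :: B ++ [:: b] -> z \in P.
Proof.
move=> HP z zin; rewrite HP mem_cat; apply/orP; right.
rewrite (_ : a :: B ++ b :: C = (a :: B ++ [:: b]) ++ C); first by rewrite mem_cat zin.
by rewrite /= -catA.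
Qed.

Lemma core A B C a b ha hb : P = A ++ a :: B ++ b :: C -> ha \notin P -> hb \notin P ->
  e ha a -> e hb b -> connect eR hb ha -> False.
Proof.
move=> HP haP hbP eha ehb /connectP[s ps' Hl].
case: (shortenP ps') Hl => s' ps'' us' _ Hl.
have [pab uab] := P_sub HP.
have off := path_eR_off ps''.
apply: (@no_cyc a (B ++ b :: hb :: s')).
- rewrite (_ : a :: B ++ b :: hb :: s' = (a :: B ++ [:: b]) ++ hb :: s'); last by rewrite /= -catA.
  rewrite cat_uniq uab us' andbT.
  apply/hasPn => z zin; apply/negP => zab.
  have zP := P_mem HP zab; move: zin; rewrite inE => /orP[/eqP ez|zs'].
  + by rewrite -ez zP in hbP.
  + by move/allP: off => /(_ z zs'); rewrite zP.
- by rewrite size_cat /=; lia.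
- rewrite -cat1s catA cat_path pab /= last_cat /= esym ehb /=.
  by rewrite (sub_path _ ps'') // => x y /and3P[].
- by rewrite last_cat /= -Hl.
Qed.

Lemma att_uniq x q1 q2 : x \notin P -> att x q1 -> att x q2 -> q1 = q2.
Proof.
move=> xP /andP[q1P /existsP[h1 /andP[c1 e1]]] /andP[q2P /existsP[h2 /andP[c2 e2]]].
apply/eqP; apply/negPn/negP => nq.
have h1P := connect_eR_off xP c1; have h2P := connect_eR_off xP c2.
have csym := sym_connect_sym eR_sym.
have [A [B [C [HP|HP]]]] := split2 q1P q2P nq.
- apply: (core HP h1P h2P e1 e2); apply: connect_trans c1; by rewrite csym.
- apply: (core HP h2P h1P e2 e1); apply: connect_trans c2; by rewrite csym.
Qed.

Lemma chord A B C a b : P = A ++ a :: B ++ b :: C -> e a b -> B = [::].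
Proof.
move=> HP eab; case: B HP => // y B HP; exfalso.
have [pab uab] := P_sub HP.
apply: (@no_cyc a ((y :: B) ++ [:: b])) => //.
- by rewrite size_cat /=; lia.
- by rewrite last_cat /= esym.
Qed.

Lemma anchorP x : x \notin P -> att x (anchor x).
Proof.
move=> xP; rewrite /anchor (negbTE xP); case: pickP => [q //|none].
by have [q hq] := att_ex xP; rewrite none in hq.
Qed.

Lemma anchor_in x : anchor x \in P.
Proof.
case xP: (x \in P); first by rewrite /anchor xP.
by case/andP: (anchorP (negbT xP)).
Qed.

Lemma anchor_id x : x \in P -> anchor x = x.
Proof. by rewrite /anchor => ->. Qed.

Lemma anchor_adj x q : x \notin P -> q \in P -> e x q -> anchor x = q.
Proof.
move=> xP qP exq; apply: (att_uniq xP (anchorP xP)).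
by rewrite /att qP; apply/existsP; exists x; rewrite connect0.
Qed.

Lemma anchor_edge x y : x \notin P -> y \notin P -> e x y -> anchor x = anchor y.
Proof.
move=> xP yP exy; apply: (att_uniq xP (anchorP xP)).
case/andP: (anchorP yP) => aP /existsP[h /andP[ch eh]].
rewrite /att aP; apply/existsP; exists h; rewrite eh andbT.
apply: connect_trans ch; apply: connect1; by rewrite /= exy xP yP.
Qed.

Lemma chord_idx a b : a \in P -> b \in P -> e a b -> index a P < index b P ->
  index b P = (index a P).+1.
Proof.
move=> aP bP eab lt; have nab := e_neq eab.
have [A [B [C [HP|HP]]]] := split2 aP bP nab.
- have B0 := chord HP eab; rewrite B0 /= in HP.
  move: Puniq; rewrite HP cat_uniq => /and3P[_ hA _].
  have aA : a \notin A by apply: (hasPn hA); rewrite inE eqxx.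
  have bA : b \notin A by apply: (hasPn hA); rewrite !inE eqxx orbT.
  rewrite !index_cat (negbTE aA) (negbTE bA) /= eqxx (negbTE nab) /= eqxx.
  by rewrite addn0 addn1.
- have B0 := chord HP (etrans (esym b a) eab); rewrite B0 /= in HP.
  move: Puniq lt; rewrite HP cat_uniq => /and3P[_ hA _].
  have aA : a \notin A by apply: (hasPn hA); rewrite !inE eqxx orbT.
  have bA : b \notin A by apply: (hasPn hA); rewrite !inE eqxx.
  rewrite !index_cat (negbTE aA) (negbTE bA) /= eqxx eq_sym (negbTE nab) /= eqxx.
  lia.
Qed.

Lemma mono x y : x \notin P -> y \notin P -> e x y -> c x = c y.
Proof.
move=> xP yP exy; apply/eqP; apply/negPn/negP => ncxy.
case hx: [exists q, (q \in P) && e x q]; last first.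
  have N : forall q, q \in P -> ~~ e x q.
    by move=> q qP; apply/negP => exq; move/negbT: hx => /existsPn/(_ q); rewrite qP exq.
  by move: ncxy; rewrite (CL xP N exy) eqxx.
case hy: [exists q, (q \in P) && e y q]; last first.
  have N : forall q, q \in P -> ~~ e y q.
    by move=> q qP; apply/negP => eyq; move/negbT: hy => /existsPn/(_ q); rewrite qP eyq.
  by move: ncxy; rewrite (CL yP N (etrans (esym y x) exy)) eqxx.
case/existsP: hx => q /andP[qP exq]; case/existsP: hy => q' /andP[q'P eyq].
have E := anchor_edge xP yP exy.
rewrite (anchor_adj xP qP exq) (anchor_adj yP q'P eyq) in E.
rewrite -E in eyq.
by apply: (notri exy eyq exq).
Qed.

Lemma Zlem p h u : p \in P -> h \notin P -> e p h -> u \notin P -> anchor u = p ->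
  (f p < f u < f h) || (f h < f u < f p) -> e p u.
Proof.
move=> pP hP eph uP au hh.
case hq: [exists q, (q \in P) && e u q].
  case/existsP: hq => q /andP[qP euq].
  by rewrite -au (anchor_adj uP qP euq) esym.
have N : forall q, q \in P -> ~~ e u q.
  by move=> q qP; apply/negP => euq; move/negbT: hq => /existsPn/(_ q); rewrite qP euq.
have [r [t [rP tP ert hrt]]] := crossP uP.
have [crt ncur] : c r = c t /\ c u != c r.
  case: (EC ert hrt) => [eur|eut|[? ? _]]; last by split=> //; rewrite eq_sym.
  - by rewrite (negbTE (N r rP)) in eur.
  - by rewrite (negbTE (N t tP)) in eut.
case/orP: hh => hh.
- case/andP: (hh) => h1 h2.
  case: (EC eph hh) => [eup | euh | [cph ncup _]].
  + by rewrite esym.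
  + by apply: (scR h1 h2 eph (mono uP hP euh)).
  + have cpr : c p = c r by apply: (@I2_eq _ _ (c u)); rewrite eq_sym.
    have [_ ht] := surround eph ert cph crt cpr hh hrt.
    by rewrite ht tP in hP.
- case/andP: (hh) => h1 h2.
  have ehp : e h p by rewrite esym.
  case: (EC ehp hh) => [euh | eup | [chp ncuh _]].
  + by rewrite esym; apply: (scL h1 h2 ehp); rewrite (mono uP hP euh).
  + by rewrite esym.
  + have chr : c h = c r by apply: (@I2_eq _ _ (c u)); rewrite eq_sym.
    have [hr _] := surround ehp ert chp crt chr hh hrt.
    by rewrite hr rP in hP.
Qed.

Lemma Ylem u u' w : u \notin P -> u' \notin P -> e u u' -> w \notin P ->
  f u < f w < f u' -> False.
Proof.
move=> uP u'P euu wP hh; case/andP: (hh) => h1 h2.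
have cu := mono uP u'P euu.
have ncw : c w != c u.
  apply/negP => /eqP cwu.
  have A := scL h1 h2 euu (sym_eq cwu).
  have B := scR h1 h2 euu (etrans cwu cu).
  exact: (notri B A euu).
have Hw : forall z, e w z -> c z = c w.
  case: (EC euu hh) => [ewu|ewu'|[_ _ Hw]] //.
  - by move: ncw; rewrite (mono wP uP ewu) eqxx.
  - by move: ncw; rewrite (mono wP u'P ewu') cu eqxx.
have [r [t [rP tP ert hrt]]] := crossP wP.
case/andP: (hrt) => h3 h4.
case: (EC ert hrt) => [ewr|ewt|[crt ncwr _]].
- have A := scL h3 h4 ert (Hw r ewr).
  by apply: (notri (etrans (esym r w) ewr) A ert).
- have B := scR h3 h4 ert (sym_eq (Hw t ewt)).
  by apply: (notri B ewt ert).
- have cur : c u = c r by apply: (@I2_eq _ _ (c w)); rewrite eq_sym.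
  have [ur _] := surround euu ert cu crt cur hh hrt.
  by rewrite ur rP in uP.
Qed.

Definition M := (\max_(x : T) f x).+1.
Definition idx x := index (anchor x) P.
Definition side x := if x \in P then 1 else if f x < f (anchor x) then 0 else 2.
Definition fo x := if x \in P then 0 else f x.
Definition key x := idx x * (3 * M) + side x * M + fo x.

Lemma side_le x : side x <= 2.
Proof. by rewrite /side; case: (x \in P) => //; case: ifP. Qed.

Lemma fo_lt x : fo x < M.
Proof. rewrite /fo /M; case: (x \in P) => //; rewrite ltnS; exact: leq_bigmax. Qed.

Lemma lex_lt (a b s t u w K : nat) : s <= 2 -> t <= 2 -> u < K -> w < K ->
  a * (3 * K) + s * K + u < b * (3 * K) + t * K + w ->
  a < b \/ (a = b /\ (s < t \/ (s = t /\ u < w))).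
Proof. move=> *; nia. Qed.

Lemma lex_eq (a b s t u w K : nat) : s <= 2 -> t <= 2 -> u < K -> w < K ->
  a * (3 * K) + s * K + u = b * (3 * K) + t * K + w -> [/\ a = b, s = t & u = w].
Proof. move=> *; have ? : a = b by nia. subst; have ? : s = t by nia. subst; split => //; lia. Qed.

Lemma key_lt x y : key x < key y ->
  idx x < idx y \/ (idx x = idx y /\ (side x < side y \/ (side x = side y /\ fo x < fo y))).
Proof. apply: lex_lt; [exact: side_le|exact: side_le|exact: fo_lt|exact: fo_lt]. Qed.

Lemma side1 x : (side x == 1) = (x \in P).
Proof. by rewrite /side; case: (x \in P) => //; case: ifP. Qed.

Lemma idx_anchor x y : idx x = idx y -> anchor x = anchor y.
Proof.
move=> H; rewrite -(nth_index x (anchor_in x)) -(nth_index x (anchor_in y)).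
by rewrite -/(idx x) -/(idx y) H.
Qed.

Lemma key_inj : injective key.
Proof.
move=> x y H; have [ha hs hf] := lex_eq (side_le x) (side_le y) (fo_lt x) (fo_lt y) H.
have := idx_anchor ha.
case xP: (x \in P); case yP: (y \in P).
- by rewrite !anchor_id.
- by move: hs; rewrite /side xP yP; case: ifP.
- by move: hs; rewrite /side xP yP; case: ifP.
- by move: hf; rewrite /fo xP yP => /finj.
Qed.

Lemma anchor_neq x : x \notin P -> f x != f (anchor x).
Proof.
move=> xP; apply: finj_neq; apply: contraNneq xP => ->; exact: anchor_in.
Qed.

Lemma side_f x y : x \notin P -> y \notin P -> anchor x = anchor y ->
  (side x < side y \/ (side x = side y /\ fo x < fo y)) -> f x < f y.
Proof.
move=> xP yP axy; have nx := anchor_neq xP; have ny := anchor_neq yP.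
rewrite /side /fo (negbTE xP) (negbTE yP) -axy in ny *.
by case: ifP; case: ifP => //; lia.
Qed.

Lemma main_sc : strongly_consistent e key (fun x => x \in P).
Proof.
move=> r s t hrs hst ert.
have hrt := ltn_trans hrs hst.
case rP: (r \in P); case tP: (t \in P).
-
  have ir : idx r = index r P by rewrite /idx anchor_id.
  have it : idx t = index t P by rewrite /idx anchor_id.
  have lrt : index r P < index t P.
    case: (key_lt hrt); rewrite -ir -it // => -[_ [|[]]];
      by rewrite /side /fo rP tP.
  have Ht := chord_idx rP tP ert lrt.
  case sP: (s \in P); last by split.
  have is_ : idx s = index s P by rewrite /idx anchor_id.
  exfalso.
  have l1 : index r P < index s P.
    case: (key_lt hrs); rewrite -ir -is_ // => -[_ [|[]]]; by rewrite /side /fo rP sP.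
  have l2 : index s P < index t P.
    case: (key_lt hst); rewrite -it -is_ // => -[_ [|[]]]; by rewrite /side /fo tP sP.
  lia.
-
  have at_ : anchor t = r by apply: anchor_adj; rewrite ?tP // esym.
  have itr : idx t = idx r by rewrite /idx at_ anchor_id.
  have sP : s \notin P.
    apply/negP => sP.
    have ir : idx r = index r P by rewrite /idx anchor_id.
    have is_ : idx s = index s P by rewrite /idx anchor_id.
    case: (key_lt hrs) => [l1|[E [l1|[l1 l2]]]].
    + case: (key_lt hst) => [l3|[E2 _]]; lia.
    + by move: l1; rewrite /side rP sP.
    + by move: l2; rewrite /fo rP sP.
  rewrite (negbTE sP); split => // _.
  have iss : idx s = idx r.
    case: (key_lt hrs) => [l1|[E _]] //; case: (key_lt hst) => [l3|[E2 _]]; lia.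
  have as_ : anchor s = r by rewrite (idx_anchor iss) anchor_id.
  apply: (Zlem rP (negbT tP) ert sP as_).
  have ss : side s = 2.
    case: (key_lt hrs) => [l0|[_ [l1|[l1 _]]]]; first by lia.
    + have h5 := side1 s; rewrite (negbTE sP) in h5; have h6 := side_le s; have sr : side r = 1 by rewrite /side rP.
      lia.
    + by move: l1; rewrite /side rP (negbTE sP); case: ifP.
  have st : f s < f t.
    apply: side_f => //; [by rewrite tP|by rewrite as_ at_|].
    case: (key_lt hst) => [l0|[_ H]] //; lia.
  have rs : f r < f s.
    move: ss; rewrite /side (negbTE sP) as_; case: ifP => // /negbT; rewrite -leqNgt leq_eqVlt.
    by case/orP => // /eqP /finj E; rewrite -E rP in sP.
  by rewrite rs st.
-
  have ar : anchor r = t by apply: anchor_adj; rewrite ?rP.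
  have irt : idx r = idx t by rewrite /idx ar anchor_id.
  have sP : s \notin P.
    apply/negP => sP.
    have it : idx t = index t P by rewrite /idx anchor_id.
    have is_ : idx s = index s P by rewrite /idx anchor_id.
    case: (key_lt hst) => [l1|[E [l1|[l1 l2]]]].
    + case: (key_lt hrs) => [l3|[E2 _]]; lia.
    + by move: l1; rewrite /side tP sP.
    + by move: l2; rewrite /fo tP sP.
  rewrite (negbTE sP); split => // _.
  have iss : idx s = idx t.
    case: (key_lt hst) => [l1|[E _]] //; case: (key_lt hrs) => [l3|[E2 _]]; lia.
  have as_ : anchor s = t by rewrite (idx_anchor iss) anchor_id.
  rewrite esym; apply: (Zlem tP (negbT rP) (etrans (esym t r) ert) sP as_).
  have ss : side s = 0.
    case: (key_lt hst) => [l0|[_ [l1|[l1 _]]]]; first by lia.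
    + by move: l1; rewrite /side tP (negbTE sP); case: ifP.
    + by move: l1; rewrite /side tP (negbTE sP); case: ifP.
  have rs : f r < f s.
    apply: side_f => //; [by rewrite rP|by rewrite as_ ar|].
    case: (key_lt hrs) => [l0|[_ H]] //; lia.
  have st : f s < f t.
    by move: ss; rewrite /side (negbTE sP) as_; case: ifP.
  by rewrite rs st orbT.
-
  have art := anchor_edge (negbT rP) (negbT tP) ert.
  case sP: (s \in P); first by split.
  exfalso.
  have irt : idx r = idx t by rewrite /idx art.
  have irs : idx r = idx s.
    case: (key_lt hrs) => [l1|[E _]] //; case: (key_lt hst) => [l3|[E2 _]]; lia.
  have ist : idx s = idx t by rewrite -irs.
  apply: (Ylem (negbT rP) (negbT tP) ert (negbT sP)).
  apply/andP; split.
  + apply: side_f; rewrite ?rP ?sP ?(idx_anchor irs) //.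
    case: (key_lt hrs) => [l0|[_ H]] //; lia.
  + apply: side_f; rewrite ?tP ?sP ?(idx_anchor ist) //.
    case: (key_lt hst) => [l0|[_ H]] //; lia.
Qed.

End Main.

Theorem corollary2 (T : finType) (e : rel T) :
  is_tree e -> pthin_eq e 2 ->
  exists (v1 : T) (p : seq T),
    uniq (v1 :: p) /\ path e v1 p /\
    exists f : T -> nat,
      injective f /\ strongly_consistent e f (fun x : T => x \in v1 :: p).
Proof.
move=> [[esym eirr] conn eacyc] [[f [c [finj sc]]] minj].
have nT : 0 < #|T|.
  rewrite lt0n; apply/negP => /eqP T0.
  by have := minj _ (pthin_le_card e); rewrite T0.
case/card_gt0P: nT => x0 _.
have [v1 _ Hmin] := @arg_minnP T x0 xpredT f erefl.
have [vn _ Hmax] := @arg_maxnP T x0 xpredT f erefl.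
have /connectP[s ps Hl] := conn v1 vn.
case: (shortenP ps) Hl => p pp up _ Hl.
exists v1, p; split => //; split => //.
have Pmin : forall x, f v1 <= f x by move=> x; apply: Hmin.
have Pmax : forall x, f x <= f (last v1 p) by move=> x; rewrite -Hl; apply: Hmax.
exists (key e f v1 p); split.
- exact: (key_inj finj up pp conn).
- exact: (main_sc esym eirr eacyc finj sc up pp Pmin Pmax conn).
Qed.
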